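(* Let $\mathrm{stat}_1,\dots,\mathrm{stat}_m$ be statistics from $\{\mathrm{lmax},\mathrm{rmax},\mathrm{lmin},\mathrm{rmin}\}$, and let $I=\sum_{\pi}t^{|\pi|}z_1^{\mathrm{stat}_1(\pi)}\cdots z_m^{\mathrm{stat}_m(\pi)}$ over irreducible separable permutations and $R$ the same sum over reducible separable permutations. Let $\phi$ be either the reverse or the complement operation, and let $\mathrm{stat}'_1,\dots,\mathrm{stat}'_m$ be statistics such that $\mathrm{stat}'_i(\phi(\pi))=\mathrm{stat}_i(\pi)$ for all permutations $\pi$ and all $i$. Then $I-z_1\cdots z_mt$ and $R+z_1\cdots z_mt$ are the generating functions $\sum_\pi t^{|\pi|}z_1^{\mathrm{stat}'_1(\pi)}\cdots z_m^{\mathrm{stat}'_m(\pi)}$ over reducible and over irreducible separable permutations, respectively.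
   Context: A permutation of length $n$ is a word $\pi=\pi_1\cdots\pi_n$ containing each element of $[n]$ exactly once; $|\pi|=n$. Reverse: $r(\pi)=\pi_n\cdots\pi_1$; complement: $c(\pi)=(n+1-\pi_1)\cdots(n+1-\pi_n)$. For $\pi$ of length $m$, $\sigma$ of length $n$: $\pi\oplus\sigma=\pi_1\cdots\pi_m(\sigma_1+m)\cdots(\sigma_n+m)$, $\pi\ominus\sigma=(\pi_1+n)\cdots(\pi_m+n)\sigma_1\cdots\sigma_n$. Separable permutations are those of length $\ge1$ obtained from $1$ by repeatedly applying $\oplus,\ominus$ (equivalently, avoiding $2413$ and $3142$). The permutation $1$ is irreducible; a permutation of length $n\ge2$ is irreducible if there is no $i$, $2\le i\le n$, such that every element of $\pi_1\cdots\pi_{i-1}$ is less than every element of $\pi_i\cdots\pi_n$; reducible means not irreducible (length $\ge2$). $\pi_i$ is a left-to-right maximum (minimum) if $\pi_i>\pi_j$ ($\pi_i<\pi_j$) for all $j<i$, a right-to-left maximum (minimum) if $\pi_i>\pi_j$ ($\pi_i<\pi_j$) for all $j>i$; $\mathrm{lmax},\mathrm{lmin},\mathrm{rmax},\mathrm{rmin}$ count these. *)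

(* Defs.v *)
From mathcomp Require Import all_boot all_order all_algebra.
From mathcomp Require Import boolp.
Set Implicit Arguments. Unset Strict Implicit. Unset Printing Implicit Defensive.
Import GRing.Theory.
Local Open Scope ring_scope.

Definition is_perm (s : seq nat) : bool := perm_eq s (iota 1 (size s)).

Definition rev_perm (s : seq nat) : seq nat := rev s.
Definition compl_perm (s : seq nat) : seq nat := map (fun x => ((size s).+1 - x)%N) s.

Definition oplus (p q : seq nat) : seq nat := p ++ map (addn (size p)) q.
Definition ominus (p q : seq nat) : seq nat := map (addn (size q)) p ++ q.

Inductive separable : seq nat -> Prop :=
| sep_one : separable [:: 1%N]
| sep_oplus p q : separable p -> separable q -> separable (oplus p q)
| sep_ominus p q : separable p -> separable q -> separable (ominus p q).

Definition irreducible (s : seq nat) : bool :=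
  (size s == 1%N) ||
  ((2 <= size s)%N &&
   ~~ has (fun k => allrel (fun x y => (x < y)%N) (take k s) (drop k s))
          (iota 1 (size s).-1)).

Definition reducible (s : seq nat) : bool := (2 <= size s)%N && ~~ irreducible s.

Definition lmax (s : seq nat) : nat :=
  \sum_(i < size s) all (fun y => (y < nth 0 s i)%N) (take i s).
Definition lmin (s : seq nat) : nat :=
  \sum_(i < size s) all (fun y => (nth 0 s i < y)%N) (take i s).
Definition rmax (s : seq nat) : nat :=
  \sum_(i < size s) all (fun y => (y < nth 0 s i)%N) (drop i.+1 s).
Definition rmin (s : seq nat) : nat :=
  \sum_(i < size s) all (fun y => (nth 0 s i < y)%N) (drop i.+1 s).

Inductive stat_kind := Lmax | Rmax | Lmin | Rmin.

Definition eval_stat (k : stat_kind) : seq nat -> nat :=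
  match k with Lmax => lmax | Rmax => rmax | Lmin => lmin | Rmin => rmin end.

(* coefficient of t^n in  sum_{pi separable, P pi} t^|pi| z_1^{st_1 pi} ... z_m^{st_m pi},
   with the z_i evaluated in an arbitrary commutative ring *)
Definition gf_coef (R : comNzRingType) (m : nat) (z : 'I_m -> R)
    (st : 'I_m -> seq nat -> nat) (P : pred (seq nat)) (n : nat) : R :=
  \sum_(s <- permutations (iota 1 n) | `[< separable s >] && P s)
     \prod_(i < m) z i ^+ st i s.

(* Main.v *)
Require Import Defs.
From mathcomp Require Import all_boot all_order all_algebra.
From mathcomp Require Import boolp.
From mathcomp Require Import zify.
Import GRing.Theory.
Set Implicit Arguments. Unset Strict Implicit.

Lemma sep_size s : separable s -> 0 < size s.
Proof. elim=> //= p q _ Hp _ Hq; rewrite ?size_cat ?size_map; lia. Qed.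

Lemma sep_perm s : separable s -> is_perm s.
Proof.
rewrite /is_perm; elim=> //= p q _ Hp _ Hq.
- rewrite /oplus size_cat size_map iotaD perm_cat // addnC iotaDl perm_map //.
- rewrite /ominus size_cat size_map addnC iotaD.
  rewrite perm_catC perm_cat // addnC iotaDl perm_map //.
Qed.

Lemma perm_bound s x : is_perm s -> x \in s -> 0 < x <= size s.
Proof. rewrite /is_perm => /perm_mem -> ; rewrite mem_iota; lia. Qed.

Lemma sep_bound s x : separable s -> x \in s -> 0 < x <= size s.
Proof. by move/sep_perm; apply: perm_bound. Qed.

Lemma sep_nth s i : separable s -> i < size s -> 0 < nth 0 s i <= size s.
Proof. move=> ss hi; exact: (sep_bound ss (mem_nth 0 hi)). Qed.

Lemma sep_rev s : separable s -> separable (rev s).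
Proof.
elim=> [|p q _ Hp _ Hq|p q _ Hp _ Hq]; first exact: sep_one.
- have -> : rev (oplus p q) = ominus (rev q) (rev p).
    by rewrite /oplus /ominus rev_cat map_rev size_rev.
  exact: sep_ominus.
- have -> : rev (ominus p q) = oplus (rev q) (rev p).
    by rewrite /oplus /ominus rev_cat map_rev size_rev.
  exact: sep_oplus.
Qed.

Lemma sep_compl s : separable s -> separable (compl_perm s).
Proof.
elim=> [|p q sp Hp sq Hq|p q sp Hp sq Hq]; first exact: sep_one.
- have -> : compl_perm (oplus p q) = ominus (compl_perm p) (compl_perm q).
    rewrite /oplus /ominus /compl_perm map_cat !size_cat !size_map -!map_comp.
    congr (_ ++ _); apply/eq_in_map => x hx /=.
    + have := sep_bound sp hx; lia.
    + have := sep_bound sq hx; lia.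
  exact: sep_ominus.
- have -> : compl_perm (ominus p q) = oplus (compl_perm p) (compl_perm q).
    rewrite /oplus /ominus /compl_perm map_cat !size_cat !size_map -!map_comp.
    congr (_ ++ _); apply/eq_in_map => x hx /=.
    + have := sep_bound sp hx; lia.
    + have := sep_bound sq hx; lia.
  exact: sep_oplus.
Qed.

Lemma compl_size s : size (compl_perm s) = size s.
Proof. by rewrite size_map. Qed.

Lemma compl_inv s : separable s -> compl_perm (compl_perm s) = s.
Proof.
move=> ss; rewrite /compl_perm size_map -map_comp -[RHS]map_id.
apply/eq_in_map => x hx /=; have := sep_bound ss hx; lia.
Qed.

Definition hd (s : seq nat) := nth 0 s 0.
Definition lt (s : seq nat) := nth 0 s (size s).-1.

Lemma red_asc s : reducible s -> hd s < lt s.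
Proof.
rewrite /reducible /irreducible => /andP [h2]; rewrite h2 /=.
have -> : (size s == 1) = false by apply/negbTE; lia.
rewrite /= negbK => /hasP [k]; rewrite mem_iota => hk /allrelP H.
have s0 : hd s = nth 0 (take k s) 0 by rewrite nth_take //; lia.
have s1 : lt s = nth 0 (drop k s) ((size s).-1 - k) by rewrite nth_drop; congr nth; lia.
rewrite s0 s1; apply: H; apply: mem_nth; [rewrite size_take; case: ifP => _ | rewrite size_drop]; set N := @size nat s in h2 hk *; lia. Qed.


Lemma sep_cases s : separable s -> 2 <= size s ->
  (reducible s /\ hd s < lt s) \/ lt s < hd s.
Proof.
case=> [//|p q sp sq|p q sp sq] hs.
- have p0 := sep_size sp; have q0 := sep_size sq.
  have hp : hd (oplus p q) = hd p by rewrite /hd /oplus nth_cat p0.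
  have hq : lt (oplus p q) = size p + lt q.
    rewrite /lt /oplus nth_cat size_cat size_map ifN; last lia.
    rewrite (nth_map 0); last lia. congr (_ + nth _ _ _); lia.
  have b1 := sep_nth sp p0.
  have b2 := @sep_nth q (size q).-1 sq.
  left; split; last first.
    rewrite hp hq /hd /lt; have := b2 ltac:(lia); lia.
  rewrite /reducible hs /irreducible hs /=.
  have -> : (size (oplus p q) == 1) = false by apply/negbTE; lia.
  rewrite /= negbK; apply/hasP; exists (size p).
    rewrite mem_iota /oplus size_cat size_map; lia.
  rewrite /oplus take_size_cat // drop_size_cat //; apply/allrelP => x y hx.
  move/mapP=> [y' hy' ->]; have := sep_bound sp hx; have := sep_bound sq hy'; lia.
- have p0 := sep_size sp; have q0 := sep_size sq.
  have hp : hd (ominus p q) = size q + hd p.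
    rewrite /hd /ominus nth_cat size_map p0 (nth_map 0) //.
  have hq : lt (ominus p q) = lt q.
    rewrite /lt /ominus nth_cat size_cat !size_map ifN; last lia.
    congr nth; lia.
  have b1 := sep_nth sp p0.
  have b2 := @sep_nth q (size q).-1 sq.
  right; rewrite hp hq /hd /lt; have := b2 ltac:(lia); lia.
Qed.

Lemma sep_red s : separable s -> 2 <= size s -> reducible s = (hd s < lt s).
Proof.
move=> ss hs; case: (sep_cases ss hs) => [[-> ->] //|h].
apply/idP/idP => [/red_asc|]; lia.
Qed.
Lemma phi_props (phi : seq nat -> seq nat) s :
  (phi = rev_perm \/ phi = compl_perm) -> separable s ->
  [/\ separable (phi s), size (phi s) = size s, phi (phi s) = s &
      (2 <= size s -> reducible (phi s) = ~~ reducible s)].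
Proof.
move=> [->|->] ss.
- have sr := sep_rev ss.
  split; rewrite /rev_perm ?size_rev ?revK // => h2.
  have e1 : hd (rev s) = lt s by rewrite /hd /lt nth_rev; [congr nth|]; lia.
  have e2 : lt (rev s) = hd s by rewrite /hd /lt size_rev nth_rev; [congr nth|]; lia.
  rewrite sep_red ?size_rev // e1 e2 sep_red //.
  case: (sep_cases ss h2) => [[_ h]|h]; lia.
- have sc := sep_compl ss.
  split; rewrite ?compl_size ?compl_inv // => h2.
  have b1 := @sep_nth s 0 ss; have b2 := @sep_nth s (size s).-1 ss.
  have e1 : hd (compl_perm s) = (size s).+1 - hd s.
    by rewrite /hd /compl_perm (nth_map 0) //; lia.
  have e2 : lt (compl_perm s) = (size s).+1 - lt s.
    by rewrite /lt /compl_perm size_map (nth_map 0) //; lia.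
  rewrite sep_red ?compl_size // e1 e2 sep_red //.
  rewrite /hd /lt in b1 b2 *.
  case: (sep_cases ss h2) => [[_ h]|h]; rewrite /hd /lt in h; have := b1 ltac:(lia); have := b2 ltac:(lia); lia.
Qed.

Lemma reindex_seq (R : nmodType) (T : eqType) (L : seq T) (uL : uniq L)
  (P Q : pred T) (f : T -> T) (F : T -> R) :
  (forall x, x \in L -> Q x -> f x \in L /\ P (f x)) ->
  (forall x, x \in L -> P x -> f x \in L /\ Q (f x)) ->
  (forall x, x \in L -> P x || Q x -> f (f x) = x) ->
  (\sum_(x <- L | P x) F x = \sum_(x <- L | Q x) F (f x))%R.
Proof.
move=> HQ HP Hff.
rewrite -big_filter -[RHS]big_filter -(big_map f predT F).
apply: perm_big; apply: uniq_perm.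
- exact: filter_uniq.
- rewrite map_inj_in_uniq ?filter_uniq // => x y.
  rewrite !mem_filter => /andP[qx lx] /andP[qy ly] e.
  by rewrite -(Hff x lx) ?qx ?orbT // e Hff // qy orbT.
- move=> y; rewrite mem_filter; apply/andP/mapP.
  + move=> [py ly]; exists (f y); last by rewrite Hff // py.
    by rewrite mem_filter; have [? ->] := HP y ly py.
  + move=> [x]; rewrite mem_filter => /andP[qx lx] ->.
    by have [-> ->] := HQ x lx qx.
Qed.
Lemma irr_red s : 2 <= size s -> irreducible s = ~~ reducible s.
Proof. by move=> h; rewrite /reducible h negbK. Qed.

Lemma eval1 k : eval_stat k [:: 1] = 1.
Proof. by case: k; rewrite /= /lmax /rmax /lmin /rmin big_ord1. Qed.

Lemma perm1 : permutations (iota 1 1) = [:: [:: 1]].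
Proof. by []. Qed.

Unset Implicit Arguments. Set Strict Implicit.
Local Open Scope ring_scope.
Local Open Scope ring_scope.

Theorem theorem11 (m : nat) (stat : 'I_m -> stat_kind)
    (phi : seq nat -> seq nat) (Hphi : phi = rev_perm \/ phi = compl_perm)
    (stat' : 'I_m -> seq nat -> nat)
    (Hstat' : forall (i : 'I_m) (s : seq nat),
        is_perm s -> stat' i (phi s) = eval_stat (stat i) s)
    (R : comNzRingType) (z : 'I_m -> R) (n : nat) :
  gf_coef z stat' reducible n =
    gf_coef z (fun i => eval_stat (stat i)) irreducible n
    - (if n == 1%N then \prod_(i < m) z i else 0)
  /\
  gf_coef z stat' irreducible n =
    gf_coef z (fun i => eval_stat (stat i)) reducible n
    + (if n == 1%N then \prod_(i < m) z i else 0).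
Proof.
case: (eqVneq n 1%N) => [->|n1].
  have e1 : phi [:: 1%N] = [:: 1%N] by case: Hphi => ->.
  have s1 : `[< separable [:: 1%N] >] = true by apply/asboolT/sep_one.
  have st1 i : stat' i [:: 1%N] = 1%N by rewrite -{1}e1 Hstat' ?eval1.
  rewrite /gf_coef perm1 !big_cons !big_nil s1 /= !addr0.
  split; [under eq_bigr do rewrite eval1 expr1; by rewrite subrr | under eq_bigr do rewrite st1 expr1; by rewrite add0r].
set L := permutations (iota 1 n).
have uL : uniq L := permutations_uniq _.
have memL x : separable x -> (x \in L) = ((size x == n) && is_perm x)%N.
  move=> sx; rewrite mem_permutations; apply/idP/andP.
    move=> h; have hs : size x = n by rewrite (perm_size h) size_iota.
    by split; [apply/eqP | rewrite /is_perm hs].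
  by move=> [/eqP <-]; rewrite /is_perm.
have key x : x \in L -> separable x ->
  [/\ phi x \in L, phi (phi x) = x, (2 <= size x)%N &
      reducible (phi x) = irreducible x /\ irreducible (phi x) = reducible x].
  move=> xL sx; have [sp sz pp hr] := phi_props Hphi sx.
  move: xL; rewrite (memL _ sx) => /andP[/eqP sn px].
  have h2 : (2 <= size x)%N by move: n1 (sep_size sx); rewrite -sn; case: (size x) => [|[|k]].
  split => //.
    by rewrite (memL _ sp) sz sn eqxx sep_perm.
  rewrite (irr_red h2) (irr_red (_ : 2 <= size (phi x))%N) ?sz // hr //.
  by rewrite negbK.
have cond x : x \in L -> `[< separable x >] -> separable x by move=> _ /asboolP.
split; rewrite /gf_coef -/L ?subr0 ?addr0.
- rewrite (@reindex_seq _ _ L uL _ (fun s => `[< separable s >] && irreducible s) phi).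
  + apply: eq_bigr => s /andP[/asboolP ss _]; apply: eq_bigr => i _.
    by rewrite Hstat' // sep_perm.
  + move=> x xL /andP[/asboolP sx ix]; have [pL _ _ [r _]] := key x xL sx.
    have [sp _ _ _] := phi_props Hphi sx.
    by rewrite pL r ix andbT; split => //; apply/asboolP.
  + move=> x xL /andP[/asboolP sx ix]; have [pL _ _ [_ r]] := key x xL sx.
    have [sp _ _ _] := phi_props Hphi sx.
    by rewrite pL r ix andbT; split => //; apply/asboolP.
  + by move=> x xL /orP[] /andP[/asboolP sx _]; have [_ -> _ _] := key x xL sx.
- rewrite (@reindex_seq _ _ L uL _ (fun s => `[< separable s >] && reducible s) phi).
  + apply: eq_bigr => s /andP[/asboolP ss _]; apply: eq_bigr => i _.
    by rewrite Hstat' // sep_perm.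
  + move=> x xL /andP[/asboolP sx ix]; have [pL _ _ [_ r]] := key x xL sx.
    have [sp _ _ _] := phi_props Hphi sx.
    by rewrite pL r ix andbT; split => //; apply/asboolP.
  + move=> x xL /andP[/asboolP sx ix]; have [pL _ _ [r _]] := key x xL sx.
    have [sp _ _ _] := phi_props Hphi sx.
    by rewrite pL r ix andbT; split => //; apply/asboolP.
  + by move=> x xL /orP[] /andP[/asboolP sx _]; have [_ -> _ _] := key x xL sx.
Qed.
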